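(* Let $f_1,f_2:[0,1]\to[0,1]$ be continuous functions such that $f_1(0)=f_2(0)=0$ and $f_1(1)=f_2(1)=1$. If $f_1\in\mathcal U$, then there exist continuous functions $g_1,g_2:[0,1]\to[0,1]$ such that $g_1(0)=g_2(0)=0$, $g_1(1)=g_2(1)=1$, and $f_1\circ g_1=f_2\circ g_2$.
   Context: A function $f:[0,1]\to\mathbb{R}$ is called piecewise monotone if there is a partition of $[0,1]$ into finitely many subintervals on each of which $f$ is strictly increasing or strictly decreasing. $\mathcal U$ denotes the set of piecewise monotone continuous functions $f:[0,1]\to[0,1]$ with the property that, for every $c\in[0,1]$, the set $f^{-1}(c)$ does not contain both a local maximum point and a local minimum point of $f$. *)

(* Defs.v *)
(* concrete reals R. Functions [0,1] -> R are modelled as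
   f : R -> R of which only the values on [0,1] matter. *)
From Stdlib Require Import Reals.
Open Scope R_scope.

Definition in01 (x : R) : Prop := 0 <= x <= 1.

Definition cont01 (f : R -> R) : Prop :=
  forall x, in01 x -> forall eps, 0 < eps ->
    exists delta, 0 < delta /\
      forall y, in01 y -> Rabs (y - x) < delta -> Rabs (f y - f x) < eps.

Definition maps01 (f : R -> R) : Prop := forall x, in01 x -> in01 (f x).

Definition strict_incr_on (f : R -> R) (a b : R) : Prop :=
  forall x y, a <= x -> x < y -> y <= b -> f x < f y.
Definition strict_decr_on (f : R -> R) (a b : R) : Prop :=
  forall x y, a <= x -> x < y -> y <= b -> f y < f x.

Definition piecewise_monotone (f : R -> R) : Prop :=
  exists (n : nat) (t : nat -> R),
    (0 < n)%nat /\ t 0%nat = 0 /\ t n = 1 /\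
    (forall i, (i < n)%nat -> t i < t (S i)) /\
    (forall i, (i < n)%nat ->
       strict_incr_on f (t i) (t (S i)) \/ strict_decr_on f (t i) (t (S i))).

Definition local_max_point (f : R -> R) (x : R) : Prop :=
  in01 x /\ exists delta, 0 < delta /\
    forall y, in01 y -> Rabs (y - x) < delta -> f y <= f x.
Definition local_min_point (f : R -> R) (x : R) : Prop :=
  in01 x /\ exists delta, 0 < delta /\
    forall y, in01 y -> Rabs (y - x) < delta -> f x <= f y.

Definition classU (f : R -> R) : Prop :=
  piecewise_monotone f /\ cont01 f /\ maps01 f /\
  forall c : R, ~ (exists x y,
      f x = c /\ f y = c /\ local_max_point f x /\ local_min_point f y).

(* Main.v *)
Require Import Defs.
From Stdlib Require Import Reals Lra Lia ClassicalEpsilon Classical.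
Open Scope R_scope.

Ltac absr := unfold Rmin, Rmax in *; repeat (destruct Rle_dec); unfold Rabs in *; repeat (destruct Rcase_abs); try lra.

Lemma cont01_ext f g : (forall x, in01 x -> f x = g x) -> cont01 f -> cont01 g.
Proof.
  intros E C x Hx e He. destruct (C x Hx e He) as [d [Hd P]].
  exists d; split; auto. intros y Hy Hyx. rewrite <- !E by auto. auto.
Qed.

Lemma cont01_lip g K : 0 < K -> (forall x y, in01 x -> in01 y -> Rabs (g y - g x) <= K * Rabs (y - x)) -> cont01 g.
Proof.
  intros HK L x Hx e He. exists (e / K). split.
  - apply Rdiv_lt_0_compat; auto.
  - intros y Hy Hyx. eapply Rle_lt_trans. apply L; auto.
    apply Rmult_lt_compat_l with (r := K) in Hyx; auto.
    replace (K * (e / K)) with e in Hyx by (field; lra). auto.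
Qed.

Lemma cont01_const c : cont01 (fun _ => c).
Proof. intros x Hx e He. exists 1; split; [lra|]. intros. absr. Qed.

Lemma cont01_comp g p : cont01 g -> cont01 p -> maps01 p -> cont01 (fun x => g (p x)).
Proof.
  intros Cg Cp Mp x Hx e He.
  destruct (Cg (p x) (Mp x Hx) e He) as [d1 [Hd1 P1]].
  destruct (Cp x Hx d1 Hd1) as [d2 [Hd2 P2]].
  exists d2; split; auto.
Qed.

Lemma cont01_opp f : cont01 f -> cont01 (fun x => - f x).
Proof.
  intros C x Hx e He. destruct (C x Hx e He) as [d [Hd P]].
  exists d; split; auto. intros y Hy Hyx. specialize (P y Hy Hyx). absr.
Qed.

Lemma cont01_aff f L A k : cont01 f -> cont01 (fun s => L + (f s - A) * k).
Proof.
  intros C x Hx e He.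
  destruct (C x Hx (e / (Rabs k + 1))) as [d [Hd P]].
  { apply Rdiv_lt_0_compat; auto. pose proof (Rabs_pos k); lra. }
  exists d; split; auto. intros y Hy Hyx. specialize (P y Hy Hyx).
  replace (L + (f y - A) * k - (L + (f x - A) * k)) with ((f y - f x) * k) by ring.
  rewrite Rabs_mult. pose proof (Rabs_pos k). pose proof (Rabs_pos (f y - f x)).
  apply Rlt_le_trans with (e / (Rabs k + 1) * (Rabs k + 1)).
  - apply Rle_lt_trans with (Rabs (f y - f x) * (Rabs k + 1)).
    + apply Rmult_le_compat_l; lra.
    + apply Rmult_lt_compat_r; lra.
  - right. field. lra.
Qed.

Lemma cont01_piecewise f g h m : 0 <= m <= 1 ->
  (forall x, in01 x -> x <= m -> f x = g x) ->
  (forall x, in01 x -> m <= x -> f x = h x) ->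
  cont01 g -> cont01 h -> cont01 f.
Proof.
  intros Hm Eg Eh Cg Ch x Hx e He.
  assert (Hm01 : in01 m) by (unfold in01; lra).
  assert (e2 : 0 < e / 2) by lra.
  destruct (Cg x Hx _ e2) as [d1 [Hd1 P1]].
  destruct (Ch x Hx _ e2) as [d2 [Hd2 P2]].
  destruct (Cg m Hm01 _ e2) as [d3 [Hd3 P3]].
  destruct (Ch m Hm01 _ e2) as [d4 [Hd4 P4]].
  assert (Egh : g m = h m) by (rewrite <- Eg, <- Eh; auto; lra).
  exists (Rmin (Rmin d1 d2) (Rmin d3 d4)). split.
  { repeat apply Rmin_pos; auto. }
  intros y Hy Hyx.
  assert (H1 : Rabs (y - x) < d1) by (absr). assert (H2 : Rabs (y - x) < d2) by absr.
  assert (H3 : Rabs (y - x) < d3) by absr. assert (H4 : Rabs (y - x) < d4) by absr.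
  unfold in01 in *.
  destruct (Rle_dec x m); destruct (Rle_dec y m).
  - rewrite !Eg by (unfold in01; lra). specialize (P1 y Hy H1). absr.
  - rewrite (Eh y) by (unfold in01; lra). rewrite (Eg x) by (unfold in01; lra).
    assert (Rabs (y - m) < d4) by absr. assert (Rabs (x - m) < d3) by absr.
    specialize (P4 y Hy H). specialize (P3 x Hx H0). rewrite Egh in P3. absr.
  - rewrite (Eg y) by (unfold in01; lra). rewrite (Eh x) by (unfold in01; lra).
    assert (Rabs (y - m) < d3) by absr. assert (Rabs (x - m) < d4) by absr.
    specialize (P3 y Hy H). specialize (P4 x Hx H0). rewrite <- Egh in P4. absr.
  - rewrite !Eh by (unfold in01; lra). specialize (P2 y Hy H2). absr.
Qed.
Definition Conn (F H : R -> R) (s1 u1 s2 u2 : R) : Prop :=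
  exists c d : R -> R,
    cont01 c /\ maps01 c /\ cont01 d /\ maps01 d /\
    c 0 = s1 /\ d 0 = u1 /\ c 1 = s2 /\ d 1 = u2 /\
    forall x, in01 x -> F (c x) = H (d x).

Lemma Conn_intro F H s1 u1 s2 u2 c d :
    cont01 c -> maps01 c -> cont01 d -> maps01 d ->
    c 0 = s1 -> d 0 = u1 -> c 1 = s2 -> d 1 = u2 ->
    (forall x, in01 x -> F (c x) = H (d x)) -> Conn F H s1 u1 s2 u2.
Proof. intros. exists c, d. tauto. Qed.

Lemma Conn_refl F H s u : in01 s -> in01 u -> F s = H u -> Conn F H s u s u.
Proof.
  intros Hs Hu E. apply (Conn_intro F H s u s u (fun _ => s) (fun _ => u)); try apply cont01_const; unfold maps01; auto.
Qed.

Lemma cont01_rev c : cont01 c -> cont01 (fun x => c (1 - x)).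
Proof.
  intros C. apply cont01_comp; auto.
  - apply (cont01_lip _ 1); [lra|]. intros. absr.
  - intros x Hx; unfold in01 in *; lra.
Qed.

Lemma Conn_sym F H s1 u1 s2 u2 : Conn F H s1 u1 s2 u2 -> Conn F H s2 u2 s1 u1.
Proof.
  intros (c & d & Cc & Mc & Cd & Md & E1 & E2 & E3 & E4 & Eq).
  apply (Conn_intro F H s2 u2 s1 u1 (fun x => c (1 - x)) (fun x => d (1 - x))).
  - apply cont01_rev; auto.
  - intros x Hx; apply Mc; unfold in01 in *; lra.
  - apply cont01_rev; auto.
  - intros x Hx; apply Md; unfold in01 in *; lra.
  - replace (1 - 0) with 1 by ring; auto.
  - replace (1 - 0) with 1 by ring; auto.
  - replace (1 - 1) with 0 by ring; auto.
  - replace (1 - 1) with 0 by ring; auto.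
  - intros x Hx; apply Eq; unfold in01 in *; lra.
Qed.

Definition glue (c1 c2 : R -> R) (x : R) : R :=
  if Rle_dec x (1/2) then c1 (2 * x) else c2 (2 * x - 1).

Lemma cont01_glue c1 c2 : cont01 c1 -> cont01 c2 -> c1 1 = c2 0 -> cont01 (glue c1 c2).
Proof.
  intros C1 C2 E.
  apply (cont01_piecewise _ (fun x => c1 (Rmin (2 * x) 1)) (fun x => c2 (Rmax (2 * x - 1) 0)) (1/2)).
  - lra.
  - intros x Hx Hm. unfold glue. destruct Rle_dec; [|lra]. f_equal. absr.
  - intros x Hx Hm. unfold glue. destruct Rle_dec.
    + assert (x = 1/2) by lra. subst. replace (2 * (1/2)) with 1 by field.
      rewrite E. f_equal. absr.
    + f_equal. absr.
  - apply cont01_comp; auto. apply (cont01_lip _ 2); [lra|]. intros. absr.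
    intros x Hx; unfold in01 in *; absr.
  - apply cont01_comp; auto. apply (cont01_lip _ 2); [lra|]. intros. absr.
    intros x Hx; unfold in01 in *; absr.
Qed.

Lemma maps01_glue c1 c2 : maps01 c1 -> maps01 c2 -> maps01 (glue c1 c2).
Proof.
  intros M1 M2 x Hx. unfold glue, in01 in *. destruct Rle_dec.
  - apply M1; unfold in01; lra.
  - apply M2; unfold in01; lra.
Qed.

Lemma Conn_trans F H s1 u1 s2 u2 s3 u3 :
  Conn F H s1 u1 s2 u2 -> Conn F H s2 u2 s3 u3 -> Conn F H s1 u1 s3 u3.
Proof.
  intros (c & d & Cc & Mc & Cd & Md & E1 & E2 & E3 & E4 & Eq)
         (c' & d' & Cc' & Mc' & Cd' & Md' & E1' & E2' & E3' & E4' & Eq').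
  apply (Conn_intro F H s1 u1 s3 u3 (glue c c') (glue d d')).
  - apply cont01_glue; auto; congruence.
  - apply maps01_glue; auto.
  - apply cont01_glue; auto; congruence.
  - apply maps01_glue; auto.
  - unfold glue; destruct Rle_dec; [|lra]. replace (2*0) with 0 by ring; auto.
  - unfold glue; destruct Rle_dec; [|lra]. replace (2*0) with 0 by ring; auto.
  - unfold glue; destruct Rle_dec; [lra|]. replace (2*1-1) with 1 by ring; auto.
  - unfold glue; destruct Rle_dec; [lra|]. replace (2*1-1) with 1 by ring; auto.
  - intros x Hx. unfold glue, in01 in *. destruct Rle_dec.
    + apply Eq; unfold in01; lra.
    + apply Eq'; unfold in01; lra.
Qed.

Lemma Conn_opp F H s1 u1 s2 u2 :
  Conn (fun s => - F s) (fun u => - H u) s1 u1 s2 u2 -> Conn F H s1 u1 s2 u2.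
Proof.
  intros (c & d & Cc & Mc & Cd & Md & E1 & E2 & E3 & E4 & Eq).
  apply (Conn_intro F H s1 u1 s2 u2 c d); auto. intros x Hx. specialize (Eq x Hx). lra.
Qed.
Lemma first_hit h s e c : cont01 h -> 0 <= s <= e -> e <= 1 -> h s <= c <= h e ->
  exists t, s <= t <= e /\ h t = c /\ forall u, s <= u < t -> h u < c.
Proof.
  intros Ch Hse He [Hsc Hce].
  destruct (Req_dec (h s) c) as [Eq|Neq].
  { exists s; split; [lra|split; auto]. intros; lra. }
  assert (Hlt : h s < c) by lra.
  set (E := fun u => s <= u <= e /\ forall v, s <= v <= u -> h v < c).
  assert (Bd : bound E). { exists e. intros u [Hu _]. lra. }
  assert (Ex : exists x, E x). { exists s. split; [lra|]. intros v Hv. replace v with s by lra. auto. }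
  destruct (completeness E Bd Ex) as [t [Ub Lub]].
  assert (Hst : s <= t). { apply Ub. split; [lra|]. intros v Hv. replace v with s by lra. auto. }
  assert (Hte : t <= e). { apply Lub. intros u [Hu _]. lra. }
  assert (Below : forall u, s <= u < t -> h u < c).
  { intros u Hu. destruct (classic (exists u', E u' /\ u < u')) as [[u' [[_ Hu'] Hlt']]|NE].
    - apply Hu'. lra.
    - exfalso. assert (t <= u). { apply Lub. intros x Ex'. destruct (Rle_dec x u); auto.
        exfalso. apply NE. exists x. split; auto. lra. } lra. }
  exists t. split; [lra|]. split; [|auto].
  assert (Ht01 : in01 t) by (unfold in01; lra).
  destruct (Rtotal_order (h t) c) as [L|[Q|G]]; auto; exfalso.
  - assert (Hte' : t < e). { destruct (Req_dec t e); [subst; lra|lra]. }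
    destruct (Ch t Ht01 (c - h t)) as [d [Hd P]]; [lra|].
    set (u' := Rmin (t + d/2) e).
    assert (E u'). { split. unfold u'; absr. intros v Hv.
      destruct (Rlt_dec v t). apply Below; lra.
      assert (Rabs (v - t) < d) by (unfold u' in Hv; absr).
      specialize (P v ltac:(unfold in01; unfold u' in Hv; absr) H). absr. }
    specialize (Ub u' H). unfold u' in Ub. absr.
  - assert (Hst' : s < t). { destruct (Req_dec s t); [subst; lra|lra]. }
    destruct (Ch t Ht01 (h t - c)) as [d [Hd P]]; [lra|].
    set (v := Rmax s (t - d/2)).
    assert (Rabs (v - t) < d) by (unfold v; absr).
    specialize (P v ltac:(unfold in01, v; absr) H).
    assert (h v < c) by (apply Below; unfold v; absr). absr.
Qed.

Lemma first_hit_down h s e c : cont01 h -> 0 <= s <= e -> e <= 1 -> h e <= c <= h s ->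
  exists t, s <= t <= e /\ h t = c /\ forall u, s <= u < t -> c < h u.
Proof.
  intros Ch Hse He Hc.
  destruct (first_hit (fun x => - h x) s e (- c)) as [t [Ht [Eq P]]]; auto.
  apply cont01_opp; auto. lra.
  exists t. split; auto. split; [lra|]. intros u Hu. specialize (P u Hu). lra.
Qed.

Lemma IVT01 h s e c : cont01 h -> 0 <= s <= e -> e <= 1 ->
  ((h s <= c <= h e) \/ (h e <= c <= h s)) -> exists t, s <= t <= e /\ h t = c.
Proof.
  intros Ch Hse He [Hc|Hc].
  - destruct (first_hit h s e c) as [t [? [? _]]]; eauto.
  - destruct (first_hit_down h s e c) as [t [? [? _]]]; eauto.
Qed.


Lemma last_hit_up h s e c : cont01 h -> 0 <= s <= e -> e <= 1 -> h s <= c <= h e ->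
  exists t, s <= t <= e /\ h t = c /\ forall u, t < u <= e -> c < h u.
Proof.
  intros Ch Hse He Hc.
  destruct (first_hit_down (fun x => h (1 - x)) (1 - e) (1 - s) c) as [t [Ht [Eq P]]].
  apply cont01_rev; auto. lra. lra.
  replace (1 - (1 - s)) with s by ring. replace (1 - (1 - e)) with e by ring. lra.
  exists (1 - t). split; [lra|]. split; auto. intros u Hu.
  replace u with (1 - (1 - u)) by ring. apply P. lra.
Qed.

Lemma last_hit_down h s e c : cont01 h -> 0 <= s <= e -> e <= 1 -> h e <= c <= h s ->
  exists t, s <= t <= e /\ h t = c /\ forall u, t < u <= e -> h u < c.
Proof.
  intros Ch Hse He Hc.
  destruct (last_hit_up (fun x => - h x) s e (- c)) as [t [Ht [Eq P]]]; auto.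
  apply cont01_opp; auto. lra.
  exists t. split; auto. split; [lra|]. intros u Hu. specialize (P u Hu). lra.
Qed.
Lemma incr_modulus F a b s e : strict_incr_on F a b -> a <= s <= b -> 0 < e ->
  exists g, 0 < g /\ forall s', a <= s' <= b -> Rabs (F s' - F s) < g -> Rabs (s' - s) < e.
Proof.
  intros I Hs He.
  assert (Up : exists g1, 0 < g1 /\ forall s', s <= s' <= b -> F s' - F s < g1 -> s' - s < e).
  { destruct (Rle_dec (s + e/2) b).
    - exists (F (s + e/2) - F s). split. assert (F s < F (s + e/2)) by (apply I; lra). lra.
      intros s' Hs' Hlt. destruct (Rlt_dec (s' - s) e); auto. exfalso.
      destruct (Req_dec s' (s + e/2)). subst; lra.
      assert (F (s + e/2) < F s') by (apply I; lra). lra.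
    - exists 1. split; [lra|]. intros. lra. }
  assert (Dn : exists g2, 0 < g2 /\ forall s', a <= s' <= s -> F s - F s' < g2 -> s - s' < e).
  { destruct (Rle_dec a (s - e/2)).
    - exists (F s - F (s - e/2)). split. assert (F (s - e/2) < F s) by (apply I; lra). lra.
      intros s' Hs' Hlt. destruct (Rlt_dec (s - s') e); auto. exfalso.
      destruct (Req_dec s' (s - e/2)). subst; lra.
      assert (F s' < F (s - e/2)) by (apply I; lra). lra.
    - exists 1. split; [lra|]. intros. lra. }
  destruct Up as [g1 [Hg1 P1]]. destruct Dn as [g2 [Hg2 P2]].
  exists (Rmin g1 g2). split. apply Rmin_pos; auto.
  intros s' Hs' Hlt. destruct (Rle_dec s s').
  - assert (F s <= F s'). { destruct (Req_dec s s'). subst; lra. left; apply I; lra. }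
    assert (s' - s < e) by (apply P1; [lra|absr]). absr.
  - assert (F s' <= F s). { left; apply I; lra. }
    assert (s - s' < e) by (apply P2; [lra|absr]). absr.
Qed.

Lemma incr_inj F a b x y : strict_incr_on F a b -> a <= x <= b -> a <= y <= b -> F x = F y -> x = y.
Proof.
  intros I Hx Hy E. destruct (Rtotal_order x y) as [L|[Q|G]]; auto.
  - assert (F x < F y) by (apply I; lra). lra.
  - assert (F y < F x) by (apply I; lra). lra.
Qed.

Lemma lift_incr F H a b u1 u2 s1 s2 :
  0 <= a -> a <= b -> b <= 1 -> cont01 F -> strict_incr_on F a b -> cont01 H ->
  in01 u1 -> in01 u2 ->
  (forall u, (u1 <= u <= u2 \/ u2 <= u <= u1) -> F a <= H u <= F b) ->
  a <= s1 <= b -> a <= s2 <= b -> F s1 = H u1 -> F s2 = H u2 ->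
  Conn F H s1 u1 s2 u2.
Proof.
  intros Ha Hab Hb CF IF CH Hu1 Hu2 Rg Hs1 Hs2 E1 E2.
  set (d := fun x => u1 + x * (u2 - u1)).
  set (P := fun v s => a <= s <= b /\ F s = v).
  set (inv := fun v => epsilon (inhabits 0) (P v)).
  assert (Hd : forall x, in01 x -> u1 <= d x <= u2 \/ u2 <= d x <= u1).
  { intros x [Hx0 Hx1]. unfold d. destruct (Rle_dec u1 u2).
    - left. split. assert (0 <= x * (u2 - u1)) by (apply Rmult_le_pos; lra). lra.
      assert (x * (u2 - u1) <= 1 * (u2 - u1)) by (apply Rmult_le_compat_r; lra). lra.
    - right. split. assert (x * (u1 - u2) <= 1 * (u1 - u2)) by (apply Rmult_le_compat_r; lra). nra.
      assert (0 <= x * (u1 - u2)) by (apply Rmult_le_pos; lra). nra. }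
  assert (Md : maps01 d).
  { intros x Hx. destruct (Hd x Hx); unfold in01 in *; lra. }
  assert (Cd : cont01 d).
  { apply (cont01_lip _ (Rabs (u2 - u1) + 1)). pose proof (Rabs_pos (u2 - u1)); lra.
    intros x y _ _. unfold d. replace (u1 + y * (u2 - u1) - (u1 + x * (u2 - u1))) with ((y - x) * (u2 - u1)) by ring.
    rewrite Rabs_mult. rewrite Rmult_comm. apply Rmult_le_compat_r. apply Rabs_pos. lra. }
  assert (Spec : forall x, in01 x -> P (H (d x)) (inv (H (d x)))).
  { intros x Hx. unfold inv. apply epsilon_spec.
    destruct (IVT01 F a b (H (d x)) CF ltac:(lra) Hb ltac:(left; apply Rg; auto)) as [t Ht].
    exists t; exact Ht. }
  apply (Conn_intro F H s1 u1 s2 u2 (fun x => inv (H (d x))) d).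
  - intros x Hx e He. destruct (Spec x Hx) as [Hs Hf].
    destruct (incr_modulus F a b _ e IF Hs He) as [g [Hg Pg]].
    destruct (cont01_comp H d CH Cd Md x Hx g Hg) as [del [Hdel Pdel]].
    exists del. split; auto. intros y Hy Hyx. destruct (Spec y Hy) as [Hs' Hf'].
    apply Pg; auto. rewrite Hf, Hf'. apply Pdel; auto.
  - intros x Hx. destruct (Spec x Hx) as [Hs _]. unfold in01; lra.
  - auto.
  - auto.
  - assert (in01 0) by (unfold in01; lra). destruct (Spec 0 H0) as [Hs Hf].
    unfold d in *. replace (u1 + 0 * (u2 - u1)) with u1 in * by ring.
    apply (incr_inj F a b); auto. congruence.
  - unfold d; ring.
  - assert (in01 1) by (unfold in01; lra). destruct (Spec 1 H0) as [Hs Hf].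
    unfold d in *. replace (u1 + 1 * (u2 - u1)) with u2 in * by ring.
    apply (incr_inj F a b); auto. congruence.
  - unfold d; ring.
  - intros x Hx. destruct (Spec x Hx) as [_ Hf]. auto.
Qed.

Lemma lift_decr F H a b u1 u2 s1 s2 :
  0 <= a -> a <= b -> b <= 1 -> cont01 F -> strict_decr_on F a b -> cont01 H ->
  in01 u1 -> in01 u2 ->
  (forall u, (u1 <= u <= u2 \/ u2 <= u <= u1) -> F b <= H u <= F a) ->
  a <= s1 <= b -> a <= s2 <= b -> F s1 = H u1 -> F s2 = H u2 ->
  Conn F H s1 u1 s2 u2.
Proof.
  intros Ha Hab Hb CF IF CH Hu1 Hu2 Rg Hs1 Hs2 E1 E2.
  apply Conn_opp. apply (lift_incr _ _ a b); auto.
  apply cont01_opp; auto.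
  intros x y ? ? ?. specialize (IF x y H0 H1 H2). lra.
  apply cont01_opp; auto.
  intros u Hu. specialize (Rg u Hu). lra.
  lra. lra.
Qed.
Definition clamp (x : R) : R := Rmax 0 (Rmin x 1).

Lemma unif01 h : cont01 h -> forall e, 0 < e -> exists d, 0 < d /\
  forall u v, in01 u -> in01 v -> Rabs (u - v) < d -> Rabs (h u - h v) < e.
Proof.
  intros Ch e He.
  assert (Cp : forall x, 0 <= x <= 1 -> continuity_pt (fun y => h (clamp y)) x).
  { intros x Hx. unfold continuity_pt, continue_in, limit1_in, limit_in. simpl. unfold R_dist.
    intros eps Heps.
    assert (Hx' : in01 x) by (unfold in01; lra).
    destruct (Ch x Hx' eps Heps) as [d [Hd P]]. exists d. split; auto.
    intros y [_ Hy]. assert (clamp x = x) by (unfold clamp; absr). rewrite H.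
    apply P. unfold in01, clamp; absr. unfold clamp; absr. }
  destruct (Heine _ _ (compact_P3 0 1) Cp (mkposreal e He)) as [d P].
  exists d. split. apply cond_pos. intros u v Hu Hv Huv.
  specialize (P u v Hu Hv Huv). simpl in P.
  assert (clamp u = u) by (unfold clamp, in01 in *; absr).
  assert (clamp v = v) by (unfold clamp, in01 in *; absr). congruence.
Qed.
Lemma Z_case F h a b :
  cont01 F -> maps01 F -> F 0 = 0 -> F 1 = 1 -> 0 <= a -> a < b -> b <= 1 ->
  strict_incr_on F 0 a -> strict_decr_on F a b -> strict_incr_on F b 1 ->
  cont01 h -> maps01 h -> h 0 = 0 -> h 1 = 1 -> Conn F h 0 0 1 1.
Proof.
  intros CF MF F0 F1 Ha Hab Hb I1 D2 I3 Ch Mh h0 h1.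
  set (x := F a). set (y := F b).
  assert (Hxy : y < x) by (apply D2; lra).
  assert (Hy0 : 0 <= y) by (destruct (MF b ltac:(unfold in01; lra)); unfold y; lra).
  assert (Hx1 : x <= 1) by (destruct (MF a ltac:(unfold in01; lra)); unfold x; lra).
  assert (Mh' : forall u, 0 <= u <= 1 -> 0 <= h u <= 1) by (intros u Hu; apply Mh; exact Hu).
  destruct (unif01 h Ch (x - y)) as [eta [Heta Pu]]; [lra|].
  assert (Claim : forall n s0, 0 <= s0 <= 1 -> h s0 <= y ->
     (exists s, 0 <= s <= a /\ F s = h s0 /\ Conn F h 0 0 s s0) ->
     1 - s0 < INR n * eta -> Conn F h 0 0 1 1).
  { induction n as [|n IH]; intros s0 Hs0 Hys0 [sl [Hsl [Fsl Csl]]] Hn.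
    { simpl in Hn. lra. }
    rewrite S_INR in Hn.
    destruct (first_hit h s0 1 x Ch ltac:(lra) ltac:(lra) ltac:(lra)) as [t [Ht [ht Bt]]].
    assert (C1 : Conn F h sl s0 a t).
    { apply (lift_incr F h 0 a); auto; try lra; try (unfold in01; lra).
      intros u Hu. assert (s0 <= u <= t) by lra. rewrite F0. split. apply Mh'; lra.
      destruct (Req_dec u t). subst u. unfold x in ht. lra. left. apply Bt. lra. }
    destruct (last_hit_up h s0 t y Ch ltac:(lra) ltac:(lra) ltac:(lra)) as [sg [Hsg [hsg Bsg]]].
    assert (C2 : Conn F h a t b sg).
    { apply (lift_decr F h a b); auto; try lra; try (unfold in01; lra).
      intros u Hu. assert (sg <= u <= t) by lra. fold x y. split.
      destruct (Req_dec u sg). subst u; lra. left; apply Bsg; lra.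
      destruct (Req_dec u t). subst u. lra. left. apply Bt. lra. }
    destruct (IVT01 F b 1 x CF ltac:(lra) ltac:(lra) ltac:(left; fold y; lra)) as [q [Hq Fq]].
    assert (C3 : Conn F h b sg q t).
    { apply (lift_incr F h b 1); auto; try lra; try (unfold in01; lra).
      intros u Hu. assert (sg <= u <= t) by lra. fold y. rewrite F1. split.
      destruct (Req_dec u sg). subst u; lra. left; apply Bsg; lra.
      apply Mh'; lra. }
    assert (Cq : Conn F h 0 0 q t).
    { eapply Conn_trans. eapply Conn_trans. eapply Conn_trans. exact Csl. exact C1. exact C2. exact C3. }
    destruct (classic (exists u, t <= u <= 1 /\ h u <= y)) as [[u1 [Hu1 hu1]]|NE].
    - destruct (first_hit_down h t u1 y Ch ltac:(lra) ltac:(lra) ltac:(lra)) as [r [Hr [hr Br]]].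
      assert (C4 : Conn F h q t b r).
      { apply (lift_incr F h b 1); auto; try lra; try (unfold in01; lra).
        intros u Hu. assert (t <= u <= r) by lra. fold y. rewrite F1. split.
        destruct (Req_dec u r). subst u; lra. left; apply Br; lra.
        apply Mh'; lra. }
      destruct (last_hit_down h t r x Ch ltac:(lra) ltac:(lra) ltac:(lra)) as [l [Hl [hl Bl]]].
      assert (C5 : Conn F h b r a l).
      { apply (lift_decr F h a b); auto; try lra; try (unfold in01; lra).
        intros u Hu. assert (l <= u <= r) by lra. fold x y. split.
        destruct (Req_dec u r). subst u; lra. left; apply Br; lra.
        destruct (Req_dec u l). subst u. lra. left. apply Bl. lra. }
      destruct (IVT01 F 0 a y CF ltac:(lra) ltac:(lra) ltac:(left; rewrite F0; fold x; lra)) as [p [Hp Fp]].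
      assert (C6 : Conn F h a l p r).
      { apply (lift_incr F h 0 a); auto; try lra; try (unfold in01; lra).
        intros u Hu. assert (l <= u <= r) by lra. fold x. rewrite F0. split.
        apply Mh'; lra.
        destruct (Req_dec u l). subst u. lra. left. apply Bl. lra. }
      assert (Hrt : eta <= r - t).
      { destruct (Rle_dec eta (r - t)); auto. exfalso.
        assert (Rabs (r - t) < eta) by absr.
        specialize (Pu r t ltac:(unfold in01; lra) ltac:(unfold in01; lra) H). rewrite hr, ht in Pu. absr. }
      apply (IH r); [lra|lra| |lra].
      exists p. split; [lra|]. split; [lra|].
      eapply Conn_trans. eapply Conn_trans. eapply Conn_trans. exact Cq. exact C4. exact C5. exact C6.
    - assert (C4 : Conn F h q t 1 1).
      { apply (lift_incr F h b 1); auto; try lra; try (unfold in01; lra).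
        intros u Hu. assert (t <= u <= 1) by lra. fold y. rewrite F1. split.
        destruct (Rle_dec (h u) y); [|lra]. exfalso. apply NE. exists u. split; auto.
        apply Mh'; lra. }
      eapply Conn_trans; eauto. }
  destruct (archimed_cor1 eta Heta) as [N [HN HN0]].
  apply (Claim N 0). lra. lra.
  exists 0. split; [lra|]. split; [lra|]. apply Conn_refl; unfold in01; lra.
  assert (0 < INR N) by (apply lt_0_INR; auto).
  assert (1 < INR N * eta).
  { apply Rmult_lt_compat_l with (r := INR N) in HN; auto. rewrite Rinv_r in HN; lra. }
  lra.
Qed.
Definition p3 (L Rr : R) (g1 g2 g3 : R -> R) (s : R) : R :=
  if Rle_dec L s then if Rle_dec s Rr then g2 s else g3 s else g1 s.

Lemma p3_left L Rr g1 g2 g3 s : L <= Rr -> g1 L = g2 L -> s <= L -> p3 L Rr g1 g2 g3 s = g1 s.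
Proof. intros HLR E Hs. unfold p3. destruct Rle_dec. destruct Rle_dec. replace s with L by lra; auto. lra. auto. Qed.

Lemma p3_mid L Rr g1 g2 g3 s : L <= s <= Rr -> p3 L Rr g1 g2 g3 s = g2 s.
Proof. intros Hs. unfold p3. destruct Rle_dec; [|lra]. destruct Rle_dec; [auto|lra]. Qed.

Lemma p3_right L Rr g1 g2 g3 s : L <= Rr -> g2 Rr = g3 Rr -> Rr <= s -> p3 L Rr g1 g2 g3 s = g3 s.
Proof. intros HLR E Hs. unfold p3. destruct Rle_dec; [|lra]. destruct Rle_dec. replace s with Rr by lra; auto. auto. Qed.

Lemma cont01_p3 L Rr g1 g2 g3 : 0 <= L -> L <= Rr -> Rr <= 1 -> g1 L = g2 L -> g2 Rr = g3 Rr ->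
  cont01 g1 -> cont01 g2 -> cont01 g3 -> cont01 (p3 L Rr g1 g2 g3).
Proof.
  intros H0 HLR H1 E1 E2 C1 C2 C3.
  apply (cont01_piecewise _ g1 (p3 (L - 1) Rr g1 g2 g3) L).
  - lra.
  - intros; apply p3_left; auto.
  - intros x Hx HL. unfold p3. destruct (Rle_dec L x); destruct (Rle_dec (L-1) x); try lra; auto.
  - auto.
  - apply (cont01_piecewise _ g2 g3 Rr).
    + lra.
    + intros x Hx HR. unfold in01 in Hx. unfold p3. destruct Rle_dec; [|lra]. destruct Rle_dec; [auto|lra].
    + intros x Hx HR. unfold p3. destruct Rle_dec; [|unfold in01 in Hx; lra]. destruct Rle_dec; auto. replace x with Rr by lra; auto.
    + auto.
    + auto.
Qed.
Lemma fold_construct f L Rr : 0 <= L -> L < Rr -> Rr <= 1 -> cont01 f -> maps01 f -> f L <> f Rr ->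
  (forall s, L <= s <= Rr -> (f L <= f s <= f Rr) \/ (f Rr <= f s <= f L)) ->
  exists f' w, cont01 f' /\ maps01 f' /\ (forall s, (s <= L \/ Rr <= s) -> f' s = f s) /\
    (f L < f Rr -> strict_incr_on f' L Rr) /\ (f Rr < f L -> strict_decr_on f' L Rr) /\
    cont01 w /\ maps01 w /\ (forall s, in01 s -> f' (w s) = f s) /\
    (forall s, (s <= L \/ Rr <= s) -> w s = s) /\
    (forall s, L <= s <= Rr -> w s = L + (f s - f L) * ((Rr - L) / (f Rr - f L))).
Proof.
  intros H0 HLR H1 Cf Mf Hne Btw.
  set (A := f L) in *. set (B := f Rr) in *.
  assert (HA : 0 <= A <= 1) by (apply Mf; unfold in01; lra).
  assert (HB : 0 <= B <= 1) by (apply Mf; unfold in01; lra).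
  set (k := (Rr - L) / (B - A)).
  assert (Hk : (B - A) * k = Rr - L) by (unfold k; field; lra).
  set (lin := fun s => A + (s - L) * ((B - A) / (Rr - L))).
  set (aff := fun s => L + (f s - A) * k).
  assert (linL : lin L = A) by (unfold lin; ring).
  assert (linR : lin Rr = B) by (unfold lin; field; lra).
  assert (affL : aff L = L) by (unfold aff, A; ring).
  assert (affR : aff Rr = Rr) by (unfold aff, B; fold B; lra).
  exists (p3 L Rr f lin f), (p3 L Rr (fun s => s) aff (fun s => s)).
  assert (Eout : forall s, (s <= L \/ Rr <= s) -> p3 L Rr f lin f s = f s).
  { intros s [Hs|Hs]. apply p3_left; auto; lra. apply p3_right; auto; lra. }
  assert (Wout : forall s, (s <= L \/ Rr <= s) -> p3 L Rr (fun s => s) aff (fun s => s) s = s).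
  { intros s [Hs|Hs]. apply p3_left; auto; lra. apply p3_right; auto; lra. }
  assert (Affin : forall s, L <= s <= Rr -> L <= aff s <= Rr).
  { intros s Hs. unfold aff. destruct (Btw s Hs) as [Hb|Hb].
    - assert (0 < k) by (unfold k; apply Rdiv_lt_0_compat; lra). nra.
    - assert (k < 0). { unfold k. unfold Rdiv. apply Rmult_pos_neg. lra. apply Rinv_lt_0_compat. lra. } nra. }
  assert (LinSlope : forall x y, lin y - lin x = (y - x) * ((B - A) / (Rr - L))) by (intros; unfold lin; ring).
  split; [|split; [|split; [|split; [|split; [|split; [|split; [|split; [|split]]]]]]]].
  - apply cont01_p3; auto; try lra. apply cont01_aff with (L := A) (A := L) (k := (B - A) / (Rr - L)) (f := fun s => s).
    apply (cont01_lip _ 1); [lra|]. intros. lra.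
  - intros s Hs. destruct (Rle_dec s L). rewrite Eout; auto.
    destruct (Rle_dec Rr s). rewrite Eout; auto.
    rewrite p3_mid by lra. unfold lin. unfold in01.
    assert (0 < (s - L) / (Rr - L) < 1). { split. apply Rdiv_lt_0_compat; lra.
      apply (Rmult_lt_reg_r (Rr - L)). lra. field_simplify; lra. }
    replace (A + (s - L) * ((B - A) / (Rr - L))) with (A + (s - L) / (Rr - L) * (B - A)) by (field; lra).
    nra.
  - auto.
  - intros HAB x y Hx Hxy Hy. rewrite !p3_mid by lra.
    assert (0 < (B - A) / (Rr - L)) by (apply Rdiv_lt_0_compat; lra).
    specialize (LinSlope x y). nra.
  - intros HAB x y Hx Hxy Hy. rewrite !p3_mid by lra.
    assert (0 < (A - B) / (Rr - L)) by (apply Rdiv_lt_0_compat; lra).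
    specialize (LinSlope x y). replace ((B - A) / (Rr - L)) with (- ((A - B) / (Rr - L))) in LinSlope by (field; lra). nra.
  - apply cont01_p3; auto; try lra. apply (cont01_lip _ 1); [lra|]. intros. lra.
    apply cont01_aff; auto. apply (cont01_lip _ 1); [lra|]. intros. lra.
  - intros s Hs. destruct (Rle_dec s L). rewrite Wout; auto.
    destruct (Rle_dec Rr s). rewrite Wout; auto.
    rewrite p3_mid by lra. specialize (Affin s ltac:(lra)). unfold in01; lra.
  - intros s Hs. destruct (Rle_dec s L). rewrite Wout, Eout; auto.
    destruct (Rle_dec Rr s). rewrite Wout, Eout; auto.
    rewrite (p3_mid L Rr (fun s => s) aff) by lra. rewrite p3_mid by (apply Affin; lra).
    unfold lin, aff. field_simplify_eq. unfold k. field. lra. lra.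
  - auto.
  - intros s Hs. rewrite p3_mid by lra. reflexivity.
Qed.
Definition PMdata (f : R -> R) (n : nat) (t : nat -> R) : Prop :=
  (0 < n)%nat /\ t 0%nat = 0 /\ t n = 1 /\ (forall i, (i < n)%nat -> t i < t (S i)) /\
  (forall i, (i < n)%nat -> strict_incr_on f (t i) (t (S i)) \/ strict_decr_on f (t i) (t (S i))).

Definition GoodF f := cont01 f /\ maps01 f /\ f 0 = 0 /\ f 1 = 1.
Definition Sol f := forall h, GoodF h -> Conn f h 0 0 1 1.

Lemma t_le f n t : PMdata f n t -> forall i j, (i <= j)%nat -> (j <= n)%nat -> t i <= t j.
Proof.
  intros (_ & _ & _ & Ht & _) i j Hij. induction Hij; intros Hn. lra.
  specialize (IHHij ltac:(lia)). specialize (Ht m ltac:(lia)). lra.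
Qed.

Lemma t_lt f n t : PMdata f n t -> forall i j, (i < j)%nat -> (j <= n)%nat -> t i < t j.
Proof.
  intros P i j Hij Hj. pose proof (t_le f n t P (S i) j Hij Hj).
  destruct P as (_ & _ & _ & Ht & _). specialize (Ht i ltac:(lia)). lra.
Qed.

Lemma t_01 f n t : PMdata f n t -> forall i, (i <= n)%nat -> 0 <= t i <= 1.
Proof.
  intros P i Hi. pose proof (t_le f n t P 0 i ltac:(lia) Hi). pose proof (t_le f n t P i n Hi ltac:(lia)).
  destruct P as (_ & Ht0 & Ht1 & _). lra.
Qed.

Lemma incr_glue f a b c : strict_incr_on f a b -> strict_incr_on f b c -> strict_incr_on f a c.
Proof.
  intros I1 I2 x y Hx Hxy Hy. destruct (Rle_dec y b). apply I1; lra.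
  destruct (Rle_dec b x). apply I2; lra.
  assert (f x < f b) by (apply I1; lra). assert (f b < f y) by (apply I2; lra). lra.
Qed.

Lemma decr_glue f a b c : strict_decr_on f a b -> strict_decr_on f b c -> strict_decr_on f a c.
Proof.
  intros I1 I2 x y Hx Hxy Hy. destruct (Rle_dec y b). apply I1; lra.
  destruct (Rle_dec b x). apply I2; lra.
  assert (f b < f x) by (apply I1; lra). assert (f y < f b) by (apply I2; lra). lra.
Qed.

Lemma incr_sub f a b a' b' : strict_incr_on f a b -> a <= a' -> b' <= b -> strict_incr_on f a' b'.
Proof. intros I H1 H2 x y Hx Hxy Hy. apply I; lra. Qed.
Lemma decr_sub f a b a' b' : strict_decr_on f a b -> a <= a' -> b' <= b -> strict_decr_on f a' b'.
Proof. intros I H1 H2 x y Hx Hxy Hy. apply I; lra. Qed.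

Lemma incr_ext f g a b : strict_incr_on f a b -> (forall s, a <= s <= b -> g s = f s) -> strict_incr_on g a b.
Proof. intros I E x y Hx Hxy Hy. rewrite !E by lra. apply I; lra. Qed.
Lemma decr_ext f g a b : strict_decr_on f a b -> (forall s, a <= s <= b -> g s = f s) -> strict_decr_on g a b.
Proof. intros I E x y Hx Hxy Hy. rewrite !E by lra. apply I; lra. Qed.

Lemma incr_range f a b s : strict_incr_on f a b -> a <= s <= b -> f a <= f s <= f b.
Proof.
  intros I Hs. split.
  destruct (Req_dec a s). subst; lra. left; apply I; lra.
  destruct (Req_dec s b). subst; lra. left; apply I; lra.
Qed.
Lemma decr_range f a b s : strict_decr_on f a b -> a <= s <= b -> f b <= f s <= f a.
Proof.
  intros I Hs. split.
  destruct (Req_dec s b). subst; lra. left; apply I; lra.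
  destruct (Req_dec a s). subst; lra. left; apply I; lra.
Qed.

Lemma remove_pm f n' t k : PMdata f (S n') t -> (S k <= n')%nat ->
  (strict_incr_on f (t k) (t (S (S k))) \/ strict_decr_on f (t k) (t (S (S k)))) ->
  PMdata f n' (fun i => if (i <=? k)%nat then t i else t (S i)).
Proof.
  intros P Hk Hm. pose proof P as (_ & Ht0 & Ht1 & Ht & Hp).
  split; [lia|]. split; [simpl; auto|]. split.
  { destruct (Nat.leb_spec n' k); [lia|]. auto. }
  split.
  - intros i Hi. destruct (Nat.leb_spec i k); destruct (Nat.leb_spec (S i) k); try lia.
    + apply Ht; lia.
    + assert (i = k) by lia. subst. apply (t_lt f (S n') t P); lia.
    + apply Ht; lia.
  - intros i Hi. destruct (Nat.leb_spec i k); destruct (Nat.leb_spec (S i) k); try lia.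
    + apply Hp; lia.
    + assert (i = k) by lia. subst. auto.
    + apply Hp; lia.
Qed.

Lemma argmin (g : nat -> R) lo hi : (lo <= hi)%nat ->
  exists j, (lo <= j <= hi)%nat /\ forall i, (lo <= i <= hi)%nat -> g j <= g i.
Proof.
  intros H. induction H.
  - exists lo. split; [lia|]. intros i Hi. replace i with lo by lia. lra.
  - destruct IHle as [j [Hj P]]. destruct (Rle_dec (g j) (g (S m))).
    + exists j. split; [lia|]. intros i Hi. destruct (Nat.eq_dec i (S m)). subst; auto. apply P; lia.
    + exists (S m). split; [lia|]. intros i Hi. destruct (Nat.eq_dec i (S m)). subst; lra.
      specialize (P i ltac:(lia)). lra.
Qed.

Lemma aff_incr f L A k a b :
  (strict_incr_on f a b /\ 0 < k) \/ (strict_decr_on f a b /\ k < 0) ->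
  strict_incr_on (fun s => L + (f s - A) * k) a b.
Proof.
  intros [[I Hk]|[I Hk]] x y Hx Hxy Hy; specialize (I x y Hx Hxy Hy); nra.
Qed.
Lemma aff_decr f L A k a b :
  (strict_decr_on f a b /\ 0 < k) \/ (strict_incr_on f a b /\ k < 0) ->
  strict_decr_on (fun s => L + (f s - A) * k) a b.
Proof.
  intros [[I Hk]|[I Hk]] x y Hx Hxy Hy; specialize (I x y Hx Hxy Hy); nra.
Qed.

Lemma Sol_comp f f' w : Sol f' -> GoodF w -> (forall s, in01 s -> f' (w s) = f s) ->
  (forall a, GoodF a -> Conn w a 0 0 1 1) -> Sol f.
Proof.
  intros Sf' Gw E Zw h Gh.
  destruct (Sf' h Gh) as (a & b & Ca & Ma & Cb & Mb & a0 & b0 & a1 & b1 & Eab).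
  destruct (Zw a (conj Ca (conj Ma (conj a0 a1)))) as (c & d & Cc & Mc & Cd & Md & c0 & d0 & c1 & d1 & Ecd).
  apply (Conn_intro f h 0 0 1 1 c (fun x => b (d x))); auto.
  - apply cont01_comp; auto.
  - intros x Hx. apply Mb, Md, Hx.
  - rewrite d0; auto.
  - rewrite d1; auto.
  - intros x Hx. rewrite <- E by (apply Mc; auto). rewrite Ecd by auto. apply Eab. apply Md; auto.
Qed.
Lemma incr_lt f a b : strict_incr_on f a b -> a < b -> f a < f b.
Proof. intros I H. apply I; lra. Qed.
Lemma decr_lt f a b : strict_decr_on f a b -> a < b -> f b < f a.
Proof. intros I H. apply I; lra. Qed.

Lemma leb_t i k : (i <= k)%nat -> (i <=? k)%nat = true.
Proof. intros; apply Nat.leb_le; auto. Qed.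
Lemma leb_f i k : (k < i)%nat -> (i <=? k)%nat = false.
Proof. intros; apply Nat.leb_gt; auto. Qed.

Lemma fold_step f t m j0 :
  PMdata f (S (S (S m))) t -> GoodF f -> (S j0 <= S m)%nat ->
  (forall f t, PMdata f (S m) t -> GoodF f -> Sol f) ->
  (f (t j0) < f (t (S (S (S j0)))) /\ strict_incr_on f (t j0) (t (S j0)) /\
     strict_decr_on f (t (S j0)) (t (S (S j0))) /\ strict_incr_on f (t (S (S j0))) (t (S (S (S j0)))) /\
     f (t j0) <= f (t (S (S j0))) /\ f (t (S j0)) <= f (t (S (S (S j0))))) \/
  (f (t (S (S (S j0)))) < f (t j0) /\ strict_decr_on f (t j0) (t (S j0)) /\
     strict_incr_on f (t (S j0)) (t (S (S j0))) /\ strict_decr_on f (t (S (S j0))) (t (S (S (S j0)))) /\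
     f (t (S (S j0))) <= f (t j0) /\ f (t (S (S (S j0)))) <= f (t (S j0))) ->
  Sol f.
Proof.
  intros P Gf Hj IH2 Hc.
  pose proof P as (Hn & T0 & T1 & Ht & Hp). pose proof Gf as (Cf & Mf & f0 & f1).
  set (n := S (S (S m))) in *.
  assert (T01 := t_01 f n t P).
  set (L := t j0). set (a := t (S j0)). set (b := t (S (S j0))). set (Rr := t (S (S (S j0)))).
  assert (HLa : L < a) by (apply Ht; unfold n; lia).
  assert (Hab : a < b) by (apply Ht; unfold n; lia).
  assert (HbR : b < Rr) by (apply Ht; unfold n; lia).
  assert (HL0 : 0 <= L) by (apply (T01 j0); unfold n; lia).
  assert (HR1 : Rr <= 1) by (apply (T01 (S (S (S j0)))); unfold n; lia).
  assert (Hne : f L <> f Rr) by (destruct Hc as [Hc|Hc]; fold L Rr in Hc; lra).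
  assert (Btw : forall s, L <= s <= Rr -> (f L <= f s <= f Rr) \/ (f Rr <= f s <= f L)).
  { intros s Hs. destruct Hc as [(H1 & I0 & D1 & I2 & H2 & H3)|(H1 & I0 & D1 & I2 & H2 & H3)];
      fold L a b Rr in H1, I0, D1, I2, H2, H3.
    - left. destruct (Rle_dec s a). pose proof (incr_range f L a s I0 ltac:(lra)). lra.
      destruct (Rle_dec s b). pose proof (decr_range f a b s D1 ltac:(lra)). lra.
      pose proof (incr_range f b Rr s I2 ltac:(lra)). lra.
    - right. destruct (Rle_dec s a). pose proof (decr_range f L a s I0 ltac:(lra)). lra.
      destruct (Rle_dec s b). pose proof (incr_range f a b s D1 ltac:(lra)). lra.
      pose proof (decr_range f b Rr s I2 ltac:(lra)). lra. }
  destruct (fold_construct f L Rr HL0 ltac:(lra) HR1 Cf Mf Hne Btw) as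
    (f' & w & Cf' & Mf' & Eout & Inc' & Dec' & Cw & Mw & Ecomp & Wout & Waff).
  set (k := (Rr - L) / (f Rr - f L)) in *.
  assert (Mono' : strict_incr_on f' L Rr \/ strict_decr_on f' L Rr).
  { destruct (Rlt_dec (f L) (f Rr)). left; auto. right; apply Dec'; lra. }
  assert (P' : PMdata f' n t).
  { split; [auto|split; [auto|split; [auto|split; [auto|]]]].
    intros i Hi. destruct (Compare_dec.le_lt_dec (S i) j0).
    - assert (t (S i) <= L) by (apply (t_le f n t P); unfold n in *; lia).
      destruct (Hp i Hi) as [I|D]; [left|right].
      + apply (incr_ext f); auto. intros s Hs. apply Eout; lra.
      + apply (decr_ext f); auto. intros s Hs. apply Eout; lra.
    - destruct (Compare_dec.le_lt_dec i (S (S j0))).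
      + assert (L <= t i) by (apply (t_le f n t P); unfold n in *; lia).
        assert (t (S i) <= Rr) by (apply (t_le f n t P); unfold n in *; lia).
        destruct Mono' as [I|D]; [left; eapply incr_sub|right; eapply decr_sub]; eauto.
      + assert (Rr <= t i) by (apply (t_le f n t P); unfold n in *; lia).
        destruct (Hp i Hi) as [I|D]; [left|right].
        * apply (incr_ext f); auto. intros s Hs. apply Eout; lra.
        * apply (decr_ext f); auto. intros s Hs. apply Eout; lra. }
  assert (P1 := remove_pm f' (S (S m)) t (S j0) P' ltac:(lia)
     ltac:(destruct Mono' as [I|D]; [left; eapply incr_sub|right; eapply decr_sub]; eauto; unfold L, a, b, Rr in *; lra)).
  assert (P2 : PMdata f' (S m) (fun i => if (i <=? j0)%nat then
                 (fun i => if (i <=? S j0)%nat then t i else t (S i)) i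
               else (fun i => if (i <=? S j0)%nat then t i else t (S i)) (S i))).
  { apply remove_pm; auto. cbv beta. rewrite (leb_t j0 (S j0)), (leb_f (S (S j0)) (S j0)) by lia.
    destruct Mono' as [I|D]; [left|right]; auto. }
  assert (Sf' : Sol f').
  { apply (IH2 f' _ P2). refine (conj Cf' (conj Mf' (conj _ _))).
    rewrite Eout; [auto|lra]. rewrite Eout; [auto|lra]. }
  assert (Gw : GoodF w).
  { refine (conj Cw (conj Mw (conj _ _))). apply Wout; lra. apply Wout; lra. }
  apply (Sol_comp f f' w Sf' Gw Ecomp).
  intros a0 Ga0. destruct Ga0 as (Ca & Ma & a00 & a01).
  assert (Wi1 : strict_incr_on w 0 L) by (apply (incr_ext (fun s => s)); [intros x y; lra| intros s Hs; apply Wout; lra]).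
  assert (Wi2 : strict_incr_on w Rr 1) by (apply (incr_ext (fun s => s)); [intros x y; lra| intros s Hs; apply Wout; lra]).
  assert (Ha1 : 0 <= a) by lra. assert (Hb1 : b <= 1) by lra.
  destruct Hc as [(H1 & I0 & D1 & I2 & H2 & H3)|(H1 & I0 & D1 & I2 & H2 & H3)];
      fold L a b Rr in H1, I0, D1, I2, H2, H3.
  - assert (Hk : 0 < k) by (unfold k; apply Rdiv_lt_0_compat; lra).
    apply (Z_case w a0 a b); auto; try lra.
    + apply (incr_glue w 0 L a); auto. apply (incr_ext (fun s => L + (f s - f L) * k)).
      apply aff_incr; left; auto. intros s Hs; apply Waff; lra.
    + apply (decr_ext (fun s => L + (f s - f L) * k)).
      apply aff_decr; left; auto. intros s Hs; apply Waff; lra.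
    + apply (incr_glue w b Rr 1); auto. apply (incr_ext (fun s => L + (f s - f L) * k)).
      apply aff_incr; left; auto. intros s Hs; apply Waff; lra.
  - assert (Hk : k < 0).
    { unfold k, Rdiv. apply Rmult_pos_neg. lra. apply Rinv_lt_0_compat. lra. }
    apply (Z_case w a0 a b); auto; try lra.
    + apply (incr_glue w 0 L a); auto. apply (incr_ext (fun s => L + (f s - f L) * k)).
      apply aff_incr; right; auto. intros s Hs; apply Waff; lra.
    + apply (decr_ext (fun s => L + (f s - f L) * k)).
      apply aff_decr; right; auto. intros s Hs; apply Waff; lra.
    + apply (incr_glue w b Rr 1); auto. apply (incr_ext (fun s => L + (f s - f L) * k)).
      apply aff_incr; right; auto. intros s Hs; apply Waff; lra.
Qed.
Lemma main_ind : forall n f t, PMdata f n t -> GoodF f -> Sol f.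
Proof.
  intro n. induction n as [n IH] using Wf_nat.lt_wf_ind. intros f t P Gf.
  pose proof P as (Hn & T0 & T1 & Ht & Hp). pose proof Gf as (Cf & Mf & f0 & f1).
  assert (T01 := t_01 f n t P).
  assert (Mf' : forall s, 0 <= s <= 1 -> 0 <= f s <= 1) by (intros; apply Mf; auto).
  assert (First : strict_incr_on f (t 0%nat) (t 1%nat)).
  { destruct (Hp 0%nat Hn) as [I|D]; auto. exfalso.
    assert (f (t 1%nat) < f (t 0%nat)) by (apply decr_lt; auto; apply Ht; auto).
    rewrite T0, f0 in H. pose proof (Mf' (t 1%nat) (T01 1%nat ltac:(lia))). lra. }
  destruct n as [|n']; [lia|].
  assert (Last : strict_incr_on f (t n') (t (S n'))).
  { destruct (Hp n' ltac:(lia)) as [I|D]; auto. exfalso.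
    assert (f (t (S n')) < f (t n')) by (apply decr_lt; auto; apply Ht; lia).
    rewrite T1, f1 in H. pose proof (Mf' (t n') (T01 n' ltac:(lia))). lra. }
  destruct n' as [|m].
  { intros h (Ch & Mh & h0 & h1). rewrite T0, T1 in First.
    apply (lift_incr f h 0 1); auto; try lra; try (unfold in01; lra).
    intros u Hu. rewrite f0, f1. apply Mh. unfold in01; lra. }
  destruct m as [|m'].
  { apply (IH 1%nat ltac:(lia) f _ (remove_pm f 1 t 0 P ltac:(lia) (or_introl (incr_glue f _ _ _ First Last))) Gf). }
  set (g := fun i => Rabs (f (t (S i)) - f (t i))).
  destruct (argmin g 1 (S m') ltac:(lia)) as [j [Hj Pj]].
  destruct j as [|j0]; [lia|].
  assert (IHm : forall f t, PMdata f (S (S m')) t -> GoodF f -> Sol f) by (intros f' t' P' G'; exact (IH (S (S m')) ltac:(lia) f' t' P' G')).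
  assert (IH2 : forall f t, PMdata f (S m') t -> GoodF f -> Sol f) by (intros f' t' P' G'; exact (IH (S m') ltac:(lia) f' t' P' G')).
  destruct (Hp j0 ltac:(lia)) as [I0|D0];
  destruct (Hp (S j0) ltac:(lia)) as [I1|D1];
  destruct (Hp (S (S j0)) ltac:(lia)) as [I2|D2].
  - apply (IHm f _ (remove_pm f (S (S m')) t j0 P ltac:(lia) (or_introl (incr_glue f _ _ _ I0 I1))) Gf).
  - apply (IHm f _ (remove_pm f (S (S m')) t j0 P ltac:(lia) (or_introl (incr_glue f _ _ _ I0 I1))) Gf).
  -
    apply (fold_step f t m' j0 P Gf ltac:(lia) IH2). left.
    assert (e0 := incr_lt _ _ _ I0 (Ht j0 ltac:(lia))).
    assert (e1 := decr_lt _ _ _ D1 (Ht (S j0) ltac:(lia))).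
    assert (e2 := incr_lt _ _ _ I2 (Ht (S (S j0)) ltac:(lia))).
    assert (Lc : f (t j0) <= f (t (S (S j0)))).
    { destruct j0 as [|j1].
      - rewrite T0, f0. apply Mf'. apply T01; lia.
      - specialize (Pj (S j1) ltac:(lia)). unfold g in Pj. absr. }
    assert (Rc : f (t (S j0)) <= f (t (S (S (S j0))))).
    { destruct (Nat.eq_dec (S (S j0)) (S (S m'))).
      - rewrite e. rewrite T1, f1. apply Mf'. apply T01; lia.
      - specialize (Pj (S (S j0)) ltac:(lia)). unfold g in Pj. absr. }
    repeat split; auto; lra.
  - apply (IHm f _ (remove_pm f (S (S m')) t (S j0) P ltac:(lia) (or_intror (decr_glue f _ _ _ D1 D2))) Gf).
  - apply (IHm f _ (remove_pm f (S (S m')) t (S j0) P ltac:(lia) (or_introl (incr_glue f _ _ _ I1 I2))) Gf).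
  -
    apply (fold_step f t m' j0 P Gf ltac:(lia) IH2). right.
    assert (e0 := decr_lt _ _ _ D0 (Ht j0 ltac:(lia))).
    assert (e1 := incr_lt _ _ _ I1 (Ht (S j0) ltac:(lia))).
    assert (e2 := decr_lt _ _ _ D2 (Ht (S (S j0)) ltac:(lia))).
    assert (Lc : f (t (S (S j0))) <= f (t j0)).
    { destruct j0 as [|j1].
      - exfalso. assert (X := incr_lt _ _ _ First (Ht 0%nat ltac:(lia))). lra.
      - specialize (Pj (S j1) ltac:(lia)). unfold g in Pj. absr. }
    assert (Rc : f (t (S (S (S j0)))) <= f (t (S j0))).
    { destruct (Nat.eq_dec (S (S j0)) (S (S m'))).
      - exfalso. rewrite e in e2. assert (X := incr_lt _ _ _ Last (Ht (S (S m')) ltac:(lia))). lra.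
      - specialize (Pj (S (S j0)) ltac:(lia)). unfold g in Pj. absr. }
    repeat split; auto; lra.
  - apply (IHm f _ (remove_pm f (S (S m')) t j0 P ltac:(lia) (or_intror (decr_glue f _ _ _ D0 D1))) Gf).
  - apply (IHm f _ (remove_pm f (S (S m')) t j0 P ltac:(lia) (or_intror (decr_glue f _ _ _ D0 D1))) Gf).
Qed.

Theorem theorem3 (f1 f2 : R -> R) :
  cont01 f1 -> maps01 f1 -> cont01 f2 -> maps01 f2 ->
  f1 0 = 0 -> f2 0 = 0 -> f1 1 = 1 -> f2 1 = 1 ->
  classU f1 ->
  exists g1 g2 : R -> R,
    cont01 g1 /\ maps01 g1 /\ cont01 g2 /\ maps01 g2 /\
    g1 0 = 0 /\ g2 0 = 0 /\ g1 1 = 1 /\ g2 1 = 1 /\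
    forall x, in01 x -> f1 (g1 x) = f2 (g2 x).
Proof.
  intros C1 M1 C2 M2 a0 b0 a1 b1 [[n [t Pm]] _].
  exact (main_ind n f1 t Pm (conj C1 (conj M1 (conj a0 a1))) f2 (conj C2 (conj M2 (conj b0 b1)))).
Qed.
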